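(* Let $\tau$ be any legal execution of $\Pi$, starting from $C_0$, which contains exactly two transactions: - client $c_w$ invokes the write-only transaction $T_w=(w(X_0)x_0,w(X_1)x_1)$; - a client $c_r\neq c_w$ invokes the read-only transaction $T_r=(r(X_0)*,r(X_1)* )$, which completes in $\tau$. Let $v_0,v_1$ be the values that $c_r$ returns for $X_0$ and $X_1$. Then either ($v_0=x_0$ and $v_1=x_1$) or ($v_0=x_0^{in}$ and $v_1=x_1^{in}$).
   Context: System model. The system is asynchronous and message-passing, with clients and servers connected by reliable links. Events are computation steps (a process reads all its incoming messages, computes, and sends at most one message to each other process) and message deliveries, scheduled by an adversary. An execution is legal from $C$ if every step follows the state machines and every sent message is eventually received. Clients communicate only with servers, and servers send to a client only responses to its requests. A transaction $T=(R_T,W_T)$ is static. Here $r(X)*$ denotes a read of $X$ with unspecified result, and $w(X)x$ a write of value $x$ to $X$. Standing assumption. There are two servers, $p_0$ storing object $X_0$ and $p_1$ storing object $X_1$. $\Pi$ is an implementation that is causally consistent (in the standard transactional sense: for each client there is a sequential execution equivalent to the committed history that respects a causal order and in which that client's transactions read legally). $\Pi$ supports multi-object write transactions and fast read-only transactions: - a read-only transaction's client sends all its requests in one step; - each server answers in at most one step; - each server-to-client message contains only one written value, of an object stored at that server. $\Pi$ also guarantees minimal progress for write-only transactions: a write-only transaction executing solo from a reachable quiescent configuration eventually makes its values visible. Configurations. Every execution starts with $T_0^{in}=(w(X_0)x_0^{in})$ by client $c_0^{in}$ and $T_1^{in}=(w(X_1)x_1^{in})$ by client $c_1^{in}$. $Q_0$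 is a reachable configuration in which $x_0^{in}$ and $x_1^{in}$ are visible. From $Q_0$, a client $c_w\notin\{c_0^{in},c_1^{in}\}$ executes the read-only transaction $T_r^{in}=(r(X_0)*,r(X_1)* )$, which returns $(x_0^{in},x_1^{in})$. $C_0$ is the configuration in which $T_r^{in}$ has completed and no message is in transit. Visibility. A value $x$ written to $X$ is visible in a reachable configuration $C$ (quiescent, or with only a write-only transaction by $c_w$ writing $x$ active) if every legal execution from $C$ containing just one read-only transaction reading $X$, by a client not in $\{c_w,c_0^{in},c_1^{in}\}$, returns $x$ for $X$. *)

(* Defs.v *)
(* An abstract model of an asynchronous message-passing
   key-value store with two servers p_0 (storing X_0) and p_1 (storing X_1)
   and clients identified by natural numbers.  Objects are encoded as bool:
   false = X_0, true = X_1. *)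
From Stdlib Require Import List Arith Permutation.
Import ListNotations.
Set Implicit Arguments.

Inductive proc : Type := Srv (o : bool) | Cli (c : nat).

Definition proc_eq_dec (p q : proc) : {p = q} + {p <> q}.
Proof. decide equality; [apply Bool.bool_dec | apply Nat.eq_dec]. Defined.

(* A static transaction T = (R_T, W_T) over the two objects:
   rd0/rd1 = does T read X_0/X_1;  wr0/wr1 = value written to X_0/X_1, if any. *)
Record txn (V : Type) : Type := Txn
  { rd0 : bool; rd1 : bool; wr0 : option V; wr1 : option V }.
Arguments Txn {V}.

Definition rdo V (T : txn V) (o : bool) : bool := if o then rd1 T else rd0 T.
Definition wro V (T : txn V) (o : bool) : option V := if o then wr1 T else wr0 T.
Definition read_only V (T : txn V) : Prop := wr0 T = None /\ wr1 T = None.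
Definition write_only V (T : txn V) : Prop := rd0 T = false /\ rd1 T = false.

Definition Trd {V : Type} : txn V := Txn true true None None.
Definition Tw {V : Type} (x0 x1 : V) : txn V := Txn false false (Some x0) (Some x1).
Definition Tw0 {V : Type} (x : V) : txn V := Txn false false (Some x) None.
Definition Tw1 {V : Type} (x : V) : txn V := Txn false false None (Some x).

Definition resp (V : Type) : Type := (option V * option V)%type.
Definition resp_at V (r : resp V) (o : bool) : option V := if o then snd r else fst r.

Record impl (V : Type) : Type := Impl {
  Msg : Type;
  St : Type;
  init_st : proc -> St;
  invoke : St -> txn V -> St;
  (* a computation step: from the local state and all incoming messages,
     compute the new state, the messages sent (destination, message), and
     possibly a response to the pending transaction (meaningful for clients) *)
  stp : proc -> St -> list (proc * Msg) -> St * list (proc * Msg) * option (resp V);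
  (* the written value carried by a message, if any (used to state the
     one-version property of server-to-client messages) *)
  mval : Msg -> option V }.

Record config V (I : impl V) : Type := Config {
  st : proc -> St I;
  transit : list (proc * proc * Msg I);      (* (source, destination, msg) *)
  inbox : proc -> list (proc * Msg I);       (* delivered, not yet read *)
  pend : nat -> option (txn V) }.
Arguments Config {V I}.

Inductive ev V (I : impl V) : Type :=
| EStep (p : proc) (rcv : list (proc * Msg I)) (sends : list (proc * Msg I))
        (out : option (resp V))
| EDeliv (src dst : proc) (m : Msg I)
| EInv (c : nat) (T : txn V).
Arguments EStep {V I}.
Arguments EDeliv {V I}.
Arguments EInv {V I}.

Definition upd {A : Type} (f : proc -> A) (p : proc) (a : A) : proc -> A :=
  fun q => if proc_eq_dec q p then a else f q.
Definition updn {A : Type} (f : nat -> A) (c : nat) (a : A) : nat -> A :=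
  fun d => if Nat.eq_dec d c then a else f d.

Definition eff_out V (I : impl V) (C : config I) (p : proc) (out : option (resp V))
  : option (resp V) :=
  match p with
  | Cli c => match pend C c with Some _ => out | None => None end
  | Srv _ => None
  end.

Definition new_pend V (I : impl V) (C : config I) (p : proc) (out : option (resp V))
  : nat -> option (txn V) :=
  match p, eff_out C p out with
  | Cli c, Some _ => updn (pend C) c None
  | _, _ => pend C
  end.

Inductive estep V (I : impl V) : config I -> ev I -> config I -> Prop :=
| ES_step (C : config I) p s' sends out :
    stp I p (st C p) (inbox C p) = (s', sends, out) ->
    estep C (EStep p (inbox C p) sends (eff_out C p out))
      (Config (upd (st C) p s')
              (transit C ++ map (fun qm => (p, fst qm, snd qm)) sends)
              (upd (inbox C) p [])
              (new_pend C p out))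
| ES_deliv (C : config I) pre post src dst m :
    transit C = pre ++ (src, dst, m) :: post ->
    estep C (EDeliv src dst m)
      (Config (st C) (pre ++ post) (upd (inbox C) dst (inbox C dst ++ [(src, m)]))
              (pend C))
| ES_inv (C : config I) c T :
    pend C c = None ->
    estep C (EInv c T)
      (Config (upd (st C) (Cli c) (invoke I (st C (Cli c)) T)) (transit C) (inbox C)
              (updn (pend C) c (Some T))).

Inductive exec V (I : impl V) : config I -> list (ev I) -> config I -> Prop :=
| X_nil (C : config I) : exec C [] C
| X_cons (C C1 C2 : config I) e E : estep C e C1 -> exec C1 E C2 -> exec C (e :: E) C2.

Definition init_config V (I : impl V) : config I :=
  Config (init_st I) [] (fun _ => []) (fun _ => None).

Definition quiescent V (I : impl V) (C : config I) : Prop :=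
  transit C = [] /\ forall c, pend C c = None.

Fixpoint inv_list V (I : impl V) (E : list (ev I)) : list (nat * txn V) :=
  match E with
  | [] => []
  | EInv c T :: E' => (c, T) :: inv_list E'
  | _ :: E' => inv_list E'
  end.

Definition is_resp_of V (I : impl V) (c : nat) (e : ev I) : option (resp V) :=
  match e with
  | EStep (Cli d) _ _ (Some r) => if Nat.eq_dec d c then Some r else None
  | _ => None
  end.

Definition no_resp_between V (I : impl V) (E : list (ev I)) (c i k : nat) : Prop :=
  forall k', i < k' < k ->
    match nth_error E k' with Some e => is_resp_of c e = None | None => True end.

Definition completes_at V (I : impl V) (E : list (ev I)) (i j : nat) (r : resp V) : Prop :=
  exists c T, nth_error E i = Some (EInv c T) /\ i < j /\
    match nth_error E j with Some e => is_resp_of c e = Some r | None => False end /\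
    no_resp_between E c i j.

Definition completes V (I : impl V) (E : list (ev I)) (i : nat) (r : resp V) : Prop :=
  exists j, completes_at E i j r.

Definition in_window V (I : impl V) (E : list (ev I)) (c i k : nat) : Prop :=
  i < k /\ no_resp_between E c i k.

Definition writes V (I : impl V) (E : list (ev I)) (j : nat) (o : bool) (v : V) : Prop :=
  exists c T, nth_error E j = Some (EInv c T) /\ wro T o = Some v.
Definition writes_obj V (I : impl V) (E : list (ev I)) (j : nat) (o : bool) : Prop :=
  exists v, writes E j o v.

Definition before (S : list nat) (i j : nat) : Prop :=
  exists p q, p < q /\ nth_error S p = Some i /\ nth_error S q = Some j.

(* K = committed transactions (all completed ones, possibly some pending ones);
   co = causal order (transitive, contains process order and reads-from);
   for each client a serialization of the committed transactions respecting
   co in which that client's transactions read legally. *)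
Definition causally_consistent V (I : impl V) (E : list (ev I)) : Prop :=
  exists (K : nat -> Prop) (co : nat -> nat -> Prop),
    (forall i, K i -> exists c T, nth_error E i = Some (EInv c T)) /\
    (forall i r, completes E i r -> K i) /\
    (forall i j k, co i j -> co j k -> co i k) /\
    (forall i j c T T', K i -> K j -> i < j ->
        nth_error E i = Some (EInv c T) -> nth_error E j = Some (EInv c T') -> co i j) /\
    (forall i c T r o v, K i -> nth_error E i = Some (EInv c T) -> completes E i r ->
        rdo T o = true -> resp_at r o = Some v ->
        exists j, K j /\ j <> i /\ writes E j o v /\ co j i) /\
    (forall c, exists S : list nat,
        NoDup S /\ (forall i, In i S <-> K i) /\
        (forall i j, K i -> K j -> co i j -> before S i j) /\
        (forall i T r o, nth_error E i = Some (EInv c T) -> completes E i r ->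
           rdo T o = true ->
           exists v j, resp_at r o = Some v /\ before S j i /\ writes E j o v /\
             forall k, before S j k -> before S k i -> ~ writes_obj E k o)).

Definition wf_impl V (I : impl V) : Prop :=
  forall p s rcv s' sends out, stp I p s rcv = (s', sends, out) ->
    NoDup (map fst sends) /\ ~ In p (map fst sends) /\
    (forall c q, p = Cli c -> In q (map fst sends) -> exists o, q = Srv o).

Fixpoint nsent V (I : impl V) (s c : proc) (E : list (ev I)) : nat :=
  match E with
  | [] => 0
  | EStep p _ sends _ :: E' =>
      (if proc_eq_dec p s then
         if in_dec proc_eq_dec c (map fst sends) then 1 else 0 else 0) + nsent s c E'
  | _ :: E' => nsent s c E'
  end.

Fixpoint nread V (I : impl V) (s c : proc) (E : list (ev I)) : nat :=
  match E with
  | [] => 0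
  | EStep p rcv _ _ :: E' =>
      (if proc_eq_dec p s then count_occ proc_eq_dec (map fst rcv) c else 0)
      + nread s c E'
  | _ :: E' => nread s c E'
  end.

(* servers send to a client only responses to its requests: each step in
   which a server sends to client c answers a distinct request of c read so far *)
Definition srv_only_responds V (I : impl V) (E : list (ev I)) : Prop :=
  forall k o rcv sends out c, nth_error E k = Some (EStep (Srv o) rcv sends out) ->
    In (Cli c) (map fst sends) ->
    nsent (Srv o) (Cli c) (firstn (S k) E) <= nread (Srv o) (Cli c) (firstn (S k) E).

Definition fast_rot V (I : impl V) (E : list (ev I)) : Prop :=
  forall i c T, nth_error E i = Some (EInv c T) -> read_only T ->
  (forall k1 k2 rcv1 s1 o1 rcv2 s2 o2,
      in_window E c i k1 -> in_window E c i k2 ->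
      nth_error E k1 = Some (EStep (Cli c) rcv1 s1 o1) ->
      nth_error E k2 = Some (EStep (Cli c) rcv2 s2 o2) ->
      s1 <> [] -> s2 <> [] -> k1 = k2) /\
  (forall o k1 k2 rcv1 s1 o1 rcv2 s2 o2,
      in_window E c i k1 -> in_window E c i k2 ->
      nth_error E k1 = Some (EStep (Srv o) rcv1 s1 o1) ->
      nth_error E k2 = Some (EStep (Srv o) rcv2 s2 o2) ->
      In (Cli c) (map fst s1) -> In (Cli c) (map fst s2) -> k1 = k2) /\
  (forall o k rcv s out,
      in_window E c i k -> nth_error E k = Some (EStep (Srv o) rcv s out) ->
      In (Cli c) (map fst rcv) -> In (Cli c) (map fst s)) /\
  (forall r o v, completes E i r -> rdo T o = true -> resp_at r o = Some v ->
      exists k rcv s out m, in_window E c i k /\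
        nth_error E k = Some (EStep (Cli c) rcv s out) /\
        In (Srv o, m) rcv /\ mval I m = Some v).

Definition one_version V (I : impl V) (E : list (ev I)) : Prop :=
  forall k o rcv sends out c m v,
    nth_error E k = Some (EStep (Srv o) rcv sends out) -> In (Cli c, m) sends ->
    mval I m = Some v -> exists j, j < k /\ writes E j o v.

(* x written to X_o is visible in C: every legal execution from C containing
   just one read-only transaction, reading X_o, by a client not in
   {cx, c0in, c1in}, returns x for X_o.  (Legal: every sent message is
   eventually received, i.e. nothing is left in transit.) *)
Definition visible V (I : impl V) (c0in c1in cx : nat) (o : bool) (x : V)
  (C : config I) : Prop :=
  forall E (C' : config I) i c T r,
    exec C E C' -> transit C' = [] ->
    inv_list E = [(c, T)] -> read_only T -> rdo T o = true ->
    c <> cx -> c <> c0in -> c <> c1in ->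
    nth_error E i = Some (EInv c T) -> completes E i r ->
    resp_at r o = Some x.

Definition solo_ev V (I : impl V) (c : nat) (e : ev I) : Prop :=
  match e with
  | EInv _ _ => False
  | EStep (Cli d) _ _ _ => d = c
  | _ => True
  end.

Definition min_progress V (I : impl V) (c0in c1in : nat) : Prop :=
  forall E (C : config I) c T,
    exec (init_config I) E C -> quiescent C -> write_only T ->
    exists E' (C' : config I),
      exec C (EInv c T :: E') C' /\ (forall e, In e E' -> solo_ev c e) /\
      forall o x, wro T o = Some x -> visible c0in c1in c o x C'.

(* Main.v *)
Require Import Defs.
From Stdlib Require Import List Permutation Lia.
Import ListNotations.

Lemma exec_app V (I : impl V) (C C1 C2 : config I) E1 E2 :
  exec C E1 C1 -> exec C1 E2 C2 -> exec C (E1 ++ E2) C2.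
Proof. induction 1; intros; simpl; auto. econstructor; eauto. Qed.

Lemma inv_list_app V (I : impl V) (E1 E2 : list (ev I)) :
  inv_list (E1 ++ E2) = inv_list E1 ++ inv_list E2.
Proof. induction E1 as [|e E1 IH]; simpl; auto. destruct e; simpl; rewrite ?IH; auto. Qed.

Lemma nth_In_inv V (I : impl V) (E : list (ev I)) j c T :
  nth_error E j = Some (EInv c T) -> In (c,T) (inv_list E).

  revert j; induction E as [|e E IH]; intros [|j] H; simpl in *; try discriminate.
  - inversion H; subst; simpl; auto.
  - destruct e; simpl; eauto.
Qed.

Lemma In_inv_nth V (I : impl V) (E : list (ev I)) c T :
  In (c,T) (inv_list E) -> exists k, nth_error E k = Some (EInv c T).

  induction E as [|e E IH]; simpl; intros H; [contradiction|].
  destruct e; try (destruct (IH H) as [k Hk]; exists (S k); auto).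
  simpl in H; destruct H as [H|H].
  - inversion H; subst; exists 0; auto.
  - destruct (IH H) as [k Hk]; exists (S k); auto.
Qed.

Lemma inv_uniq V (I : impl V) (E : list (ev I)) j j' c T :
  NoDup (inv_list E) -> nth_error E j = Some (EInv c T) ->
  nth_error E j' = Some (EInv c T) -> j = j'.

  revert j j'; induction E as [|e E IH]; intros [|j] [|j'] ND H H'; simpl in *;
    try discriminate; auto.
  - inversion H; subst; simpl in ND; inversion ND; subst. exfalso; eauto using nth_In_inv.
  - inversion H'; subst; simpl in ND; inversion ND; subst. exfalso; eauto using nth_In_inv.
  - f_equal. apply IH; auto. destruct e; simpl in ND; auto. inversion ND; auto.
Qed.

Lemma completes_suffix V (I : impl V) (E E3 : list (ev I)) i r :
  completes E i r -> completes (E ++ E3) i r.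

  intros [j [c [T [H1 [H2 [H3 H4]]]]]].
  assert (Hj : j < length E).
  { apply nth_error_Some. destruct (nth_error E j); [discriminate|contradiction]. }
  exists j, c, T. rewrite !nth_error_app1; try lia.
  repeat split; auto. intros k' Hk. rewrite nth_error_app1 by lia. apply H4; auto.
  all: apply nth_error_Some; congruence.
Qed.

Lemma nth_prefix A (E1 E : list A) k :
  nth_error (E1 ++ E) (length E1 + k) = nth_error E k.
Proof. rewrite nth_error_app2 by lia. f_equal; lia. Qed.

Lemma completes_prefix V (I : impl V) (E1 E : list (ev I)) i r :
  completes E i r -> completes (E1 ++ E) (length E1 + i) r.

  intros [j [c [T [H1 [H2 [H3 H4]]]]]].
  exists (length E1 + j), c, T. rewrite !nth_prefix. repeat split; auto; try lia.
  intros k' Hk. replace k' with (length E1 + (k' - length E1)) by lia.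
  rewrite nth_prefix. apply H4; lia.
Qed.
Arguments exec_app {V I C C1 C2 E1 E2}.
Arguments nth_In_inv {V I E j c T}.
Arguments In_inv_nth {V I E c T}.
Arguments inv_uniq {V I E j j' c T}.
Arguments completes_suffix {V I E} E3 {i r}.
Arguments completes_prefix {V I} E1 {E i r}.

Theorem lemma1 (V : Type) (I : impl V)
  (c0in c1in cw : nat)
  (Hc01 : c0in <> c1in) (Hw0 : cw <> c0in) (Hw1 : cw <> c1in)
  (* system model *)
  (Hwf : wf_impl I)
  (Hsrv : forall E (C : config I), exec (init_config I) E C -> srv_only_responds E)
  (* Pi is causally consistent *)
  (Hcc : forall E (C : config I), exec (init_config I) E C -> causally_consistent E)
  (* fast read-only transactions *)
  (Hfast : forall E (C : config I), exec (init_config I) E C -> fast_rot E /\ one_version E)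
  (* minimal progress for write-only transactions *)
  (Hprog : min_progress I c0in c1in)
  (* Q0 *)
  (x0in x1in : V) (alpha : list (ev I)) (Q0 : config I)
  (Halpha : exec (init_config I) alpha Q0)
  (HalphaT : Permutation (inv_list alpha) [(c0in, Tw0 x0in); (c1in, Tw1 x1in)])
  (HQ0 : quiescent Q0)
  (Hvis0 : visible c0in c1in cw false x0in Q0)
  (Hvis1 : visible c0in c1in cw true x1in Q0)
  (* C0 *)
  (beta : list (ev I)) (C0 : config I)
  (Hbeta : exec Q0 beta C0)
  (HbetaT : inv_list beta = [(cw, Trd)])
  (Hbeta_ret : exists i0, nth_error beta i0 = Some (EInv cw Trd) /\
                          completes beta i0 (Some x0in, Some x1in))
  (HC0 : transit C0 = [])
  (* the execution tau *)
  (x0 x1 : V) (cr : nat) (Hcr : cr <> cw)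
  (tau : list (ev I)) (C' : config I)
  (Htau : exec C0 tau C') (Hlegal : transit C' = [])
  (HtauT : Permutation (inv_list tau) [(cw, Tw x0 x1); (cr, Trd)])
  (i : nat) (r : resp V)
  (Hi : nth_error tau i = Some (EInv cr Trd)) (Hr : completes tau i r) :
  (resp_at r false = Some x0 /\ resp_at r true = Some x1) \/
  (resp_at r false = Some x0in /\ resp_at r true = Some x1in).
Proof.
  set (E := alpha ++ beta ++ tau).
  assert (HE : exec (init_config I) E C') by (unfold E; eauto using exec_app).
  set (L5 := [(c0in, Tw0 x0in); (c1in, Tw1 x1in); (cw, @Trd V); (cw, Tw x0 x1); (cr, @Trd V)]).
  assert (Hperm : Permutation (inv_list E) L5).
  { unfold E; rewrite !inv_list_app, HbetaT.
    change L5 with ([(c0in, Tw0 x0in); (c1in, Tw1 x1in)] ++ [(cw, @Trd V)] ++ [(cw, Tw x0 x1); (cr, @Trd V)]).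
    apply Permutation_app; [auto| apply Permutation_app; auto]. }
  assert (HND5 : NoDup L5).
  { unfold L5; repeat constructor; simpl;
    intros H; repeat destruct H as [H|H]; try contradiction;
    unfold Tw0, Tw1, Tw, Trd in H; inversion H; congruence. }
  assert (HND : NoDup (inv_list E)) by (eapply Permutation_NoDup; [apply Permutation_sym; eauto| auto]).
  assert (HinE : forall p, In p L5 -> In p (inv_list E))
    by (intros p Hp; eapply Permutation_in; [apply Permutation_sym; eauto|auto]).
  destruct (In_inv_nth (HinE (c0in, Tw0 x0in) ltac:(simpl; auto))) as [k0 Hk0].
  destruct (In_inv_nth (HinE (c1in, Tw1 x1in) ltac:(simpl; auto))) as [k1 Hk1].
  assert (Hkw : exists kw, nth_error tau kw = Some (EInv cw (Tw x0 x1))).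
  { apply In_inv_nth. eapply Permutation_in; [apply Permutation_sym; eauto|simpl; auto]. }
  destruct Hkw as [kw Hkw].
  destruct Hbeta_ret as [i0 [Hi0 Hc0]].
  assert (Hi0lt : i0 < length beta) by (apply nth_error_Some; congruence).
  set (iW := length (alpha ++ beta) + kw).
  set (iRin := length alpha + i0).
  set (iR := length (alpha ++ beta) + i).
  assert (HEa : E = (alpha ++ beta) ++ tau) by (unfold E; apply app_assoc).
  assert (HiW : nth_error E iW = Some (EInv cw (Tw x0 x1))) by (rewrite HEa; unfold iW; rewrite nth_prefix; auto).
  assert (HiR : nth_error E iR = Some (EInv cr Trd)) by (rewrite HEa; unfold iR; rewrite nth_prefix; auto).
  assert (HiRin : nth_error E iRin = Some (EInv cw Trd)).
  { unfold E, iRin. rewrite nth_prefix, nth_error_app1 by lia. auto. }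
  assert (HcR : completes E iR r) by (rewrite HEa; apply completes_prefix; auto).
  assert (HcRin : completes E iRin (Some x0in, Some x1in)).
  { unfold E, iRin. apply completes_prefix. apply completes_suffix. auto. }
  assert (Hlt : iRin < iW) by (unfold iRin, iW; rewrite length_app; lia).
  assert (Hcl : forall j o v, writes E j o v ->
     (o = false /\ v = x0in /\ j = k0) \/ (o = true /\ v = x1in /\ j = k1) \/
     (o = false /\ v = x0 /\ j = iW) \/ (o = true /\ v = x1 /\ j = iW)).
  { intros j o v [c [T [Hj Hw]]].
    assert (Hin : In (c, T) L5) by (eapply Permutation_in; eauto using nth_In_inv).
    simpl in Hin; repeat destruct Hin as [Hin|Hin]; try contradiction;
      inversion Hin; subst; destruct o; simpl in Hw; try discriminate;
      inversion Hw; subst.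
    - left; repeat split; eapply inv_uniq; eauto.
    - right; left; repeat split; eapply inv_uniq; eauto.
    - right; right; right; repeat split; eapply inv_uniq; eauto.
    - right; right; left; repeat split; eapply inv_uniq; eauto. }
  destruct (Hcc _ _ HE) as [K [co [HK1 [HK2 [Htr [Hpo [Hrf HS]]]]]]].
  destruct (HS cr) as [S [HSnd [HSK [HSco Hleg]]]].
  assert (KR : K iR) by eauto.
  assert (KRin : K iRin) by eauto.
  destruct (Hleg iR Trd r false HiR HcR eq_refl) as [v0 [j0 [Hv0 [Hb0 [Hw0' Hn0]]]]].
  destruct (Hleg iR Trd r true HiR HcR eq_refl) as [v1 [j1 [Hv1 [Hb1 [Hw1' Hn1]]]]].
  rewrite Hv0, Hv1.
  assert (HwW0 : writes E iW false x0) by (exists cw, (Tw x0 x1); auto).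
  assert (HwW1 : writes E iW true x1) by (exists cw, (Tw x0 x1); auto).
  destruct (Hcl _ _ _ Hw0') as [[_ [-> ->]]|[[? _]|[[_ [-> ->]]|[? _]]]]; try discriminate;
  destruct (Hcl _ _ _ Hw1') as [[? _]|[[_ [-> ->]]|[[? _]|[_ [-> ->]]]]]; try discriminate;
  auto.
  - (* v0 = x0in, v1 = x1 *)
    destruct (Hrf iR cr Trd r true _ KR HiR HcR eq_refl Hv1) as [j [Kj [_ [Hwj Hcoj]]]].
    destruct (Hcl _ _ _ Hwj) as [[? _]|[[_ [-> _]]|[[? _]|[_ [_ ->]]]]]; try discriminate; auto.
    destruct (Hrf iRin cw Trd _ false x0in KRin HiRin HcRin eq_refl eq_refl) as [j' [Kj' [_ [Hwj' Hcoj']]]].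
    destruct (Hcl _ _ _ Hwj') as [[_ [_ ->]]|[[? _]|[[_ [-> _]]|[? _]]]]; try discriminate; auto.
    exfalso.
    assert (co k0 iW) by (eapply Htr; [eauto | eapply Hpo; eauto]).
    apply (Hn0 iW); [apply HSco; eauto | apply HSco; eauto | exists x0; auto].
  - (* v0 = x0, v1 = x1in *)
    destruct (Hrf iR cr Trd r false _ KR HiR HcR eq_refl Hv0) as [j [Kj [_ [Hwj Hcoj]]]].
    destruct (Hcl _ _ _ Hwj) as [[_ [-> _]]|[[? _]|[[_ [_ ->]]|[? _]]]]; try discriminate; auto.
    destruct (Hrf iRin cw Trd _ true x1in KRin HiRin HcRin eq_refl eq_refl) as [j' [Kj' [_ [Hwj' Hcoj']]]].
    destruct (Hcl _ _ _ Hwj') as [[? _]|[[_ [_ ->]]|[[? _]|[_ [-> _]]]]]; try discriminate; auto.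
    exfalso.
    assert (co k1 iW) by (eapply Htr; [eauto | eapply Hpo; eauto]).
    apply (Hn1 iW); [apply HSco; eauto | apply HSco; eauto | exists x1; auto].
Qed.
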